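(* Let $g\ge1$ be an integer, $A\ge1$ real, $\mathbf n\ge\mathbf 1_g$ in $\mathbb N^g$, and $f=\sum_{\mathbf k\ge\mathbf 0_g}f_{\mathbf k}\mathbf z^{\mathbf k}$ a power series of order of magnitude $(A,\mathbf n)$. Let $\mathbf c\in P(\mathbf 0_g,1)$ and let $F_{\mathbf c}(\mathbf y)=f(\mathbf c+\mathbf y\star(\mathbf 1_g-\|\mathbf c\|))$ be the series recentered at $\mathbf c$. Then $F_{\mathbf c}$ is a power series of order of magnitude $(A_{\mathbf c},\mathbf n+\mathbf 1_g)$ with $A_{\mathbf c}=\mathbf n!\,A\,\exp(g+|\mathbf n|_1)\,2^{g+|\mathbf n|_1}(\mathbf 1_g-\|\mathbf c\|)^{-\mathbf n-\mathbf 2_g}$.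
   Context: For $\mathbf x=(x_1,\dots,x_g)\in\mathbb C^g$: $|\mathbf x|_1=\sum|x_k|$, $\|\mathbf x\|=(|x_1|,\dots,|x_g|)$; $\mathbf x\star\mathbf y=(x_1y_1,\dots,x_gy_g)$; $\mathbf 0_g,\mathbf 1_g,\mathbf 2_g$ are the constant vectors; inequalities between vectors are componentwise; multi-index notation: $\mathbf x^{\mathbf k}=\prod x_m^{k_m}$, $\mathbf n!=\prod n_m!$. $P(\mathbf x,r)=\prod_kD(x_k,r)$ is the open polydisc. A series $f=\sum_{\mathbf k}f_{\mathbf k}\mathbf z^{\mathbf k}$ has order of magnitude $(A,\mathbf n)$ ($A\ge1$, $\mathbf n\ge\mathbf 1_g$) if $|f_{\mathbf k}|\le A(\mathbf k+\mathbf 1_g)^{\mathbf n}=A\prod_m(k_m+1)^{n_m}$ for all $\mathbf k$. *)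

(* Defs.v *)
From mathcomp Require Import all_boot all_order all_algebra.
From mathcomp Require Import all_classical all_reals all_analysis.
From mathcomp Require Export complex.
Set Implicit Arguments. Unset Strict Implicit. Unset Printing Implicit Defensive.
Import Order.TTheory GRing.Theory Num.Theory numFieldNormedType.Exports.
Local Open Scope ring_scope.
Local Open Scope classical_set_scope.
Notation normc := ComplexField.Normc.normc.

Definition mpow (R : realType) (g : nat) (x : 'I_g -> R[i]) (k : 'I_g -> nat) : R[i] :=
  \prod_(m < g) x m ^+ k m.

Definition mnorm1 (g : nat) (n : 'I_g -> nat) : nat := \sum_(m < g) n m.

Definition mfact (g : nat) (n : 'I_g -> nat) : nat := \prod_(m < g) (n m)`!.

Definition order_of_magnitude (R : realType) (g : nat) (f : ('I_g -> nat) -> R[i])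
    (A : R) (n : 'I_g -> nat) : Prop :=
  1 <= A /\ (forall m, (1 <= n m)%N) /\
  forall k : 'I_g -> nat,
    normc (f k) <= A * \prod_(m < g) ((k m).+1%:R) ^+ (n m).

Definition polydisc (R : realType) (g : nat) (x : 'I_g -> R[i]) (r : R)
    (z : 'I_g -> R[i]) : Prop :=
  forall m, normc (z m - x m) < r.

Definition box_psum (R : realType) (g : nat) (f : ('I_g -> nat) -> R[i])
    (z : 'I_g -> R[i]) (N : nat) : R[i] :=
  \sum_(k : {ffun 'I_g -> 'I_N}) f (fun m => nat_of_ord (k m)) *
                                 mpow z (fun m => nat_of_ord (k m)).

Definition pseries_sum (R : realType) (g : nat) (f : ('I_g -> nat) -> R[i])
    (z : 'I_g -> R[i]) (l : R[i]) : Prop :=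
  forall e : R, 0 < e -> exists N0 : nat, forall N : nat, (N0 <= N)%N ->
    normc (box_psum f z N - l) < e.

(* Main.v *)
Require Import Defs.
From mathcomp Require Import all_boot all_order all_algebra.
From mathcomp Require Import all_classical all_reals all_analysis.
From mathcomp Require Import complex.
From mathcomp Require Import lra zify ring.
Import Order.TTheory GRing.Theory Num.Theory numFieldNormedType.Exports.
Local Open Scope ring_scope.
Local Open Scope complex_scope.
Set Implicit Arguments. Unset Strict Implicit.

Section Basics.
Variable R : realType.
Local Notation C := (R[i]).
Local Notation nc := (@normc R).
Local Notation Rec := (@complex.Re R).
Local Notation Imc := (@complex.Im R).

Lemma nc_ge0 (x : C) : 0 <= nc x.
Proof. by case: x => a b /=; apply: sqrtr_ge0. Qed.

Lemma nc0 : nc 0 = 0.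
Proof. exact: ComplexField.Normc.normc0. Qed.

Lemma ncM (x y : C) : nc (x * y) = nc x * nc y.
Proof. exact: ComplexField.Normc.normcM. Qed.

Lemma ncD (x y : C) : nc (x + y) <= nc x + nc y.
Proof. exact: le_normcD. Qed.

Lemma ncN (x : C) : nc (- x) = nc x.
Proof. exact: normcN. Qed.

Lemma ncB (x y : C) : nc (x - y) = nc (y - x).
Proof. by rewrite -ncN opprB. Qed.

Lemma ncX (x : C) n : nc (x ^+ n) = nc x ^+ n.
Proof.
elim: n => [|n IH]; first by rewrite !expr0 ComplexField.Normc.normc1.
by rewrite !exprS ncM IH.
Qed.

Lemma ncR (x : R) : nc (x%:C) = `|x|.
Proof. by rewrite /= expr0n /= addr0 sqrtr_sqr. Qed.

Lemma ncn n : nc (n%:R) = n%:R.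
Proof.
have -> : (n%:R : C) = (n%:R : R)%:C by rewrite rmorph_nat.
by rewrite ncR ger0_norm.
Qed.

Lemma ncRe (x : C) : `|Rec x| <= nc x.
Proof.
case: x => a b /=; rewrite -sqrtr_sqr ler_sqrt ?lerDl ?sqr_ge0 //.
by rewrite addr_ge0 ?sqr_ge0.
Qed.

Lemma ncIm (x : C) : `|Imc x| <= nc x.
Proof.
case: x => a b /=; rewrite -sqrtr_sqr ler_sqrt ?lerDr ?sqr_ge0 //.
by rewrite addr_ge0 ?sqr_ge0.
Qed.

Lemma ncReIm (x : C) : nc x <= `|Rec x| + `|Imc x|.
Proof.
case: x => a b /=.
have h : a^+2 + b^+2 <= (`|a| + `|b|)^+2.
  have ha := real_normK (num_real a); have hb := real_normK (num_real b).
  have := normr_ge0 a; have := normr_ge0 b. nra.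
apply: le_trans (_ : Num.sqrt (a^+2 + b^+2) <= Num.sqrt ((`|a| + `|b|)^+2)) _.
  by rewrite ler_sqrt // sqr_ge0.
by rewrite sqrtr_sqr ger0_norm // addr_ge0.
Qed.

Lemma nc_sum (I : Type) (r : seq I) (P : pred I) (F : I -> C) :
  nc (\sum_(i <- r | P i) F i) <= \sum_(i <- r | P i) nc (F i).
Proof.
elim/big_rec2: _ => [|i y1 y2 _ H]; first by rewrite nc0.
by apply: le_trans (ncD _ _) _; rewrite lerD2l.
Qed.

Lemma nc_prod (I : Type) (r : seq I) (P : pred I) (F : I -> C) :
  nc (\prod_(i <- r | P i) F i) = \prod_(i <- r | P i) nc (F i).
Proof.
elim/big_rec2: _ => [|i y1 y2 _ H]; first exact: ComplexField.Normc.normc1.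
by rewrite ncM H.
Qed.

Definition cv (u : nat -> C) (l : C) : Prop :=
  forall e : R, 0 < e -> exists N0 : nat, forall N : nat, (N0 <= N)%N ->
    nc (u N - l) < e.

Lemma cv_le (u : nat -> C) l x b N0 :
  cv u l -> (forall N, (N0 <= N)%N -> nc (u N - x) <= b) -> nc (l - x) <= b.
Proof.
move=> hu hb; apply/ler_addgt0Pr => e e0.
have [N1 hN1] := hu e e0.
have h1 := hN1 (maxn N0 N1) (leq_maxr _ _).
have h2 := hb (maxn N0 N1) (leq_maxl _ _).
have -> : l - x = (l - u (maxn N0 N1)) + (u (maxn N0 N1) - x) by rewrite addrA subrK.
apply: le_trans (ncD _ _) _; rewrite addrC; apply: lerD => //.
by rewrite ncB ltW.
Qed.

Lemma cv_add (u v : nat -> C) (l m : C) : cv u l -> cv v m -> cv (fun N => u N + v N) (l + m).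
Proof.
move=> hu hv e e0.
have e20 : 0 < e / 2 by rewrite divr_gt0.
have [N1 h1] := hu _ e20; have [N2 h2] := hv _ e20.
exists (maxn N1 N2) => N; rewrite geq_max => /andP[a b].
have -> : u N + v N - (l + m) = (u N - l) + (v N - m).
  by rewrite opprD addrACA.
apply: le_lt_trans (ncD _ _) _.
have -> : e = e / 2 + e / 2 by rewrite -splitr.
by apply: ltrD; [apply: h1|apply: h2].
Qed.

Lemma cv_mulr (u : nat -> C) (l w : C) : cv u l -> cv (fun N => u N * w) (l * w).
Proof.
move=> hu e e0.
have w0 : 0 < nc w + 1 by rewrite ltr_wpDl ?nc_ge0.
have [N1 h1] := hu _ (divr_gt0 e0 w0).
exists N1 => N hN; rewrite -mulrBl ncM.
apply: le_lt_trans (_ : nc (u N - l) * (nc w + 1) < e).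
  by rewrite ler_wpM2l ?nc_ge0 // lerDl.
by rewrite -ltr_pdivlMr //; apply: h1.
Qed.

Lemma cv_const (l : C) : cv (fun _ => l) l.
Proof. by move=> e e0; exists 0%N => N _; rewrite subrr nc0. Qed.

Lemma cv_sum (I : Type) (r : seq I) (u : I -> nat -> C) (l : I -> C) :
  (forall i, cv (u i) (l i)) ->
  cv (fun N => \sum_(i <- r) u i N) (\sum_(i <- r) l i).
Proof.
move=> h; elim: r => [|i r IH].
  by under eq_fun do rewrite big_nil; rewrite big_nil; apply: cv_const.
under eq_fun do rewrite big_cons; rewrite big_cons.
exact: cv_add.
Qed.

End Basics.
Arguments cv {R}.

Section Mono.
Variable R : realType.
Local Notation C := (R[i]).
Local Notation nc := (@normc R).
Local Notation Rec := (@complex.Re R).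
Local Notation Imc := (@complex.Im R).

Lemma sup_seq (x : nat -> R) (b : R) : (forall N, x N <= b) ->
  exists s, (forall N, x N <= s) /\ (forall e, 0 < e -> exists N, s - e < x N).
Proof.
move=> hb.
have hs : has_sup (range x).
  split; first by exists (x 0%N); exists 0%N.
  by exists b => _ [N _ <-].
exists (sup (range x)); split.
  by move=> N; apply: sup_upper_bound => //; exists N.
move=> e e0; have [_ [N _ <-] h] := sup_adherent e0 hs.
by exists N.
Qed.

Lemma mono_close (x : nat -> R) (s e : R) N1 :
  {homo x : a b / (a <= b)%N >-> a <= b} -> (forall N, x N <= s) ->
  s - e < x N1 -> forall N, (N1 <= N)%N -> `|x N - s| < e.
Proof.
move=> hx hs h1 N hN.
have := hx _ _ hN; have := hs N => a b.
rewrite ler0_norm ?subr_le0 //; lra.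
Qed.

Lemma mono_dom (u : nat -> C) (p : nat -> R) (s : R) :
  (forall N N', (N <= N')%N -> nc (u N' - u N) <= p N' - p N) ->
  (forall N, p N <= s) -> (forall e, 0 < e -> exists N, s - e < p N) ->
  exists l, cv u l /\ forall N, nc (l - u N) <= s - p N.
Proof.
move=> hd hs hap.
have pmono : {homo p : a b / (a <= b)%N >-> a <= b}.
  by move=> a b ab; have := hd _ _ ab; have := nc_ge0 (u b - u a); lra.
have reB N N' : Rec (u N' - u N) = Rec (u N') - Rec (u N).
  by case: (u N') (u N) => ? ? [? ?].
have imB N N' : Imc (u N' - u N) = Imc (u N') - Imc (u N).
  by case: (u N') (u N) => ? ? [? ?].
have reB0 (x y : C) : Rec (x - y) = Rec x - Rec y by case: x y => ? ? [? ?].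
have imB0 (x y : C) : Imc (x - y) = Imc x - Imc y by case: x y => ? ? [? ?].
pose xr N := Rec (u N) + p N.
pose xi N := Imc (u N) + p N.
have xrmono : {homo xr : a b / (a <= b)%N >-> a <= b}.
  move=> a b ab; rewrite /xr.
  have := hd _ _ ab; have := ncRe (u b - u a); rewrite reB.
  have := ler_norm (Rec (u b) - Rec (u a)).
  have := ler_normr (Rec (u b) - Rec (u a)) 0.
  move=> _; have := normrN (Rec (u b) - Rec (u a)).
  have := ler_norm (- (Rec (u b) - Rec (u a))). lra.
have ximono : {homo xi : a b / (a <= b)%N >-> a <= b}.
  move=> a b ab; rewrite /xi.
  have := hd _ _ ab; have := ncIm (u b - u a); rewrite imB.
  have := normrN (Imc (u b) - Imc (u a)).
  have := ler_norm (- (Imc (u b) - Imc (u a))). lra.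
have [sr [hsr1 hsr2]] : exists sr, (forall N, xr N <= sr) /\
    (forall e, 0 < e -> exists N, sr - e < xr N).
  apply: (@sup_seq xr (Rec (u 0%N) - p 0%N + 2 * s)) => N.
  rewrite /xr; have := hd _ _ (leq0n N); have := ncRe (u N - u 0%N); rewrite reB.
  have := ler_norm (Rec (u N) - Rec (u 0%N)).
  have := hs N; have := hs 0%N; have := pmono _ _ (leq0n N). lra.
have [si [hsi1 hsi2]] : exists si, (forall N, xi N <= si) /\
    (forall e, 0 < e -> exists N, si - e < xi N).
  apply: (@sup_seq xi (Imc (u 0%N) - p 0%N + 2 * s)) => N.
  rewrite /xi; have := hd _ _ (leq0n N); have := ncIm (u N - u 0%N); rewrite imB.
  have := ler_norm (Imc (u N) - Imc (u 0%N)).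
  have := hs N; have := hs 0%N; have := pmono _ _ (leq0n N). lra.
pose l : C := (sr - s) +i* (si - s).
have hcv : cv u l.
  move=> e e0.
  have e4 : 0 < e / 4 by rewrite divr_gt0.
  have [N1 h1] := hsr2 _ e4; have [N2 h2] := hsi2 _ e4; have [N3 h3] := hap _ e4.
  exists (maxn N1 (maxn N2 N3)) => N; rewrite !geq_max => /and3P[a b c].
  have k1 := mono_close xrmono hsr1 h1 a.
  have k2 := mono_close ximono hsi1 h2 b.
  have k3 := mono_close pmono hs h3 c.
  apply: le_lt_trans (ncReIm _) _.
  have -> : Rec (u N - l) = (xr N - sr) - (p N - s).
    rewrite reB0 /xr /l /=; lra.
  have -> : Imc (u N - l) = (xi N - si) - (p N - s).
    rewrite imB0 /xi /l /=; lra.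
  have := ler_normB (xr N - sr) (p N - s).
  have := ler_normB (xi N - si) (p N - s). lra.
exists l; split => // N.
apply: (@cv_le R u l (u N) _ N hcv) => N' hN'.
have := hd _ _ hN'; have := hs N'; lra.
Qed.

End Mono.

Definition bs (V : nmodType) (g N : nat) (F : ('I_g -> nat) -> V) : V :=
  \sum_(k : {ffun 'I_g -> 'I_N}) F (fun m => nat_of_ord (k m)).

Lemma bs_sub (g N N' : nat) : (N <= N')%N ->
  exists S : {set {ffun 'I_g -> 'I_N'}}, forall (V : zmodType) (G : ('I_g -> nat) -> V),
    bs N' G - bs N G = \sum_(k : {ffun 'I_g -> 'I_N'} | k \notin S) G (fun m => nat_of_ord (k m)).
Proof.
move=> le.
pose h := fun k : {ffun 'I_g -> 'I_N} => [ffun m => widen_ord le (k m)].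
have hinj : injective h.
  move=> a b /ffunP e; apply/ffunP => m; have := e m; rewrite !ffunE.
  by move/(congr1 val) => /= /val_inj.
exists (h @: setT) => V G.
rewrite /bs (bigID (fun k => k \in h @: setT)) /=.
have -> : \sum_(i | i \in h @: setT) G (fun m => nat_of_ord (i m)) =
          \sum_(k : {ffun 'I_g -> 'I_N}) G (fun m => nat_of_ord (k m)).
  rewrite big_imset /=; last by move=> x y _ _; apply: hinj.
  rewrite (eq_bigl predT) /=; last by move=> i; rewrite in_setT.
  apply: eq_bigr => k _; congr G; apply: funext => m; by rewrite ffunE.
by rewrite addrC addKr.
Qed.

Section Fub.
Variable R : realType.
Variable g : nat.
Local Notation C := (R[i]).
Local Notation nc := (@normc R).
Local Notation K := ('I_g -> nat).

Lemma bs_diff N N' (F : K -> C) (H : K -> R) : (N <= N')%N ->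
  (forall k, nc (F k) <= H k) -> nc (bs N' F - bs N F) <= bs N' H - bs N H.
Proof.
move=> le hFH; have [S hS] := bs_sub g le; rewrite !hS.
by apply: le_trans (nc_sum _ _ _) _; apply: ler_sum => k _; apply: hFH.
Qed.

Lemma bs_mono N N' (H : K -> R) : (N <= N')%N -> (forall k, 0 <= H k) ->
  bs N H <= bs N' H.
Proof.
move=> le h0; have [S hS] := bs_sub g le.
by rewrite -subr_ge0 hS; apply: sumr_ge0 => k _; apply: h0.
Qed.

Lemma nc_bs N (F : K -> C) : nc (bs N F) <= bs N (fun k => nc (F k)).
Proof. exact: nc_sum. Qed.

Lemma bs_ge0 N (H : K -> R) : (forall k, 0 <= H k) -> 0 <= bs N H.
Proof. by move=> h; apply: sumr_ge0 => k _; apply: h. Qed.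

Lemma fubini (e : K -> K -> C) (w : K -> C) (S : K -> C) (B : R) :
  (forall j, cv (fun N => bs N (fun k => e k j)) (S j)) ->
  (forall N, bs N (fun k => bs N (fun j => nc (e k j * w j))) <= B) ->
  exists L, cv (fun N => bs N (fun k => bs N (fun j => e k j * w j))) L /\
            cv (fun M => bs M (fun j => S j * w j)) L.
Proof.
move=> hS hB.
pose D N M := bs N (fun k => bs M (fun j => e k j * w j)).
pose P N M := bs N (fun k => bs M (fun j => nc (e k j * w j))).
have F1 N N' M M' : (N <= N')%N -> (M <= M')%N ->
    nc (D N' M' - D N M) <= P N' M' - P N M.
  move=> hN hM.
  have -> : D N' M' - D N M = (D N' M' - D N' M) + (D N' M - D N M).
    by rewrite addrA subrK.
  apply: le_trans (ncD _ _) _.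
  have -> : P N' M' - P N M = (P N' M' - P N' M) + (P N' M - P N M).
    by rewrite addrA subrK.
  apply: lerD.
    have E1 : D N' M' - D N' M = bs N' (fun k => bs M' (fun j => e k j * w j)
        - bs M (fun j => e k j * w j)) by rewrite /D /bs sumrB.
    have E2 : P N' M' - P N' M = bs N' (fun k => bs M' (fun j => nc (e k j * w j))
        - bs M (fun j => nc (e k j * w j))) by rewrite /P /bs sumrB.
    rewrite E1 E2; apply: le_trans (nc_bs _ _) _.
    apply: ler_sum => k _.
    exact: (@bs_diff M M' (fun j => e (fun m => nat_of_ord (k m)) j * w j) (fun j => nc (e (fun m => nat_of_ord (k m)) j * w j)) hM (fun j => lexx _)).
  apply: bs_diff => // k; exact: nc_bs.
have F2 N N' M M' : (N <= N')%N -> (M <= M')%N -> P N M <= P N' M'.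
  by move=> a b; have := F1 _ _ _ _ a b; have := nc_ge0 (D N' M' - D N M); lra.
have [s [hs1 hs2]] := @sup_seq R (fun N => P N N) B hB.
have [L [hL hLb]] := @mono_dom R (fun N => D N N) (fun N => P N N) s
    (fun N N' h => F1 _ _ _ _ h h) hs1 hs2.
exists L; split => //.
pose T M := bs M (fun j => S j * w j).
have hT M : cv (fun N' => D N' M) (T M).
  have -> : (fun N' => D N' M) = (fun N' => bs M (fun j => bs N' (fun k => e k j) * w j)).
    apply: funext => N'; rewrite /D /bs exchange_big /=.
    by apply: eq_bigr => j _; rewrite mulr_suml.
  by apply: cv_sum => j; apply: cv_mulr; apply: hS.
have hTb N M : (N <= M)%N -> nc (T M - D N N) <= s - P N N.
  move=> hNM; apply: (@cv_le R _ _ _ _ M (hT M)) => N' hN'.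
  have := F1 _ _ _ _ (leq_trans hNM hN') hNM.
  have := F2 _ _ _ _ (leqnn N') hN'; have := hs1 N'; lra.
move=> ep ep0.
have ep2 : 0 < ep / 2 by rewrite divr_gt0.
have [N hN] := hs2 _ ep2.
exists N => M hM.
have -> : T M - L = (T M - D N N) + (D N N - L) by rewrite addrA subrK.
apply: le_lt_trans (ncD _ _) _; rewrite [nc (D N N - L)]ncB.
have := hTb _ _ hM; have := hLb N; lra.
Qed.

End Fub.

Lemma inner_exists (R : realType) (g : nat) (u : ('I_g -> nat) -> R[i]) (Bj : R) :
  (forall N, bs N (fun k => normc (u k)) <= Bj) -> exists l, cv (fun N => bs N u) l.
Proof.
move=> hB.
have [s [hs1 hs2]] := @sup_seq R (fun N => bs N (fun k => normc (u k))) Bj hB.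
have [l [hl _]] := @mono_dom R (fun N => bs N u) (fun N => bs N (fun k => normc (u k))) s
   (fun N N' h => @bs_diff R g N N' u (fun k => normc (u k)) h (fun k => lexx _)) hs1 hs2.
by exists l.
Qed.

Lemma sum_ext (V : nmodType) (K N : nat) (F : nat -> V) : (K < N)%N ->
  (forall t, (K < t)%N -> F t = 0) ->
  \sum_(0 <= t < N) F t = \sum_(0 <= t < K.+1) F t.
Proof.
move=> hK hF; rewrite (big_cat_nat (leq0n K.+1) hK) /=.
rewrite [X in _ + X]big1_seq ?addr0 // => t /andP[_].
by rewrite mem_index_iota => /andP[a _]; apply: hF.
Qed.

Lemma sum_le_trunc (R : realDomainType) (K N : nat) (F : nat -> R) :
  (forall t, (K < t)%N -> F t = 0) -> (forall t, 0 <= F t) ->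
  \sum_(0 <= t < N) F t <= \sum_(0 <= t < K.+1) F t.
Proof.
move=> hF h0; case: (leqP N K.+1) => hN.
  rewrite [X in _ <= X](big_cat_nat (leq0n N) hN) /= lerDl.
  by apply: sumr_ge0 => t _.
by rewrite (sum_ext (ltnW hN) hF).
Qed.

Lemma nat_bin_bound (n k j : nat) :
  ((k.+1) ^ n * 'C(k, j) <= n`! * (j.+1) ^ n * 'C(k + n, j + n))%N.
Proof.
elim: n => [|n IH]; first by rewrite !expn0 fact0 !addn0 !mul1n.
have id := mul_bin_diag (k + n).+1 (j + n); rewrite /= in id.
rewrite expnS factS !addnS.
set Q := (n`! * j.+1 ^ n)%N in IH *.
set a := ((k.+1) ^ n * 'C(k, j))%N in IH *.
set b := 'C(k + n, j + n) in IH id *.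
set c := 'C((k + n).+1, (j + n).+1) in id *.
have e1 : (k.+1 * (k.+1 ^ n) * 'C(k, j) = k.+1 * a)%N by rewrite /a mulnA.
rewrite e1.
have h1 : (k.+1 * a <= k.+1 * (Q * b))%N by rewrite leq_mul2l IH orbT.
have h2 : (k.+1 * (Q * b) <= (k + n).+1 * (Q * b))%N by rewrite leq_mul2r ltnS leq_addr orbT.
have h3 : ((k + n).+1 * (Q * b) = Q * ((j + n).+1 * c))%N.
  by rewrite mulnCA id.
have h4 : ((j + n).+1 <= n.+1 * j.+1)%N by nia.
apply: (leq_trans h1); apply: (leq_trans h2); rewrite h3.
rewrite /Q.
have -> : (n.+1 * n`! * j.+1 ^ n.+1 * c = (n`! * j.+1 ^ n) * ((n.+1 * j.+1) * c))%N.
  by rewrite expnS; ring.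
by rewrite leq_mul2l leq_mul2r h4 !orbT.
Qed.

Section Real.
Variable R : realType.

Lemma geom_bin (rho : R) : 0 <= rho -> rho < 1 ->
  forall m N, \sum_(0 <= t < N) 'C(t, m)%:R * rho ^+ (t - m) <= ((1 - rho)^-1) ^+ m.+1.
Proof.
move=> r0 r1.
set X := (1 - rho)^-1.
have X0 : 0 < X by rewrite invr_gt0 subr_gt0.
have hX : rho * X + 1 = X.
  rewrite /X; field; lra.
elim => [|m IH] N.
  rewrite expr1; elim: N => [|N IHN]; first by rewrite big_geq // ltW.
  rewrite big_nat_recl // bin0 subn0 expr0 mulr1.
  have -> : \sum_(0 <= i < N) 'C(i.+1, 0)%:R * rho ^+ (i.+1 - 0) =
            rho * \sum_(0 <= i < N) 'C(i, 0)%:R * rho ^+ (i - 0).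
    rewrite mulr_sumr; apply: eq_bigr => i _.
    by rewrite !bin0 !subn0 exprS mulrCA.
  have : rho * \sum_(0 <= i < N) 'C(i, 0)%:R * rho ^+ (i - 0) <= rho * X.
    by rewrite ler_wpM2l.
  lra.
elim: N => [|N IHN]; first by rewrite big_geq // exprn_ge0 // ltW.
rewrite big_nat_recl // bin0n /= mul0r add0r.
have -> : \sum_(0 <= i < N) 'C(i.+1, m.+1)%:R * rho ^+ (i.+1 - m.+1) =
          rho * \sum_(0 <= i < N) 'C(i, m.+1)%:R * rho ^+ (i - m.+1)
          + \sum_(0 <= i < N) 'C(i, m)%:R * rho ^+ (i - m).
  rewrite mulr_sumr -big_split /=; apply: eq_bigr => i _.
  rewrite binS natrD mulrDl subSS; congr (_ + _).
  case: (leqP i m) => him.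
    by rewrite bin_small ?ltnS // !mul0r mulr0.
  by rewrite mulrCA -exprS subnSK.
have := IH N.
have : rho * \sum_(0 <= i < N) 'C(i, m.+1)%:R * rho ^+ (i - m.+1) <= rho * X ^+ m.+2.
  by rewrite ler_wpM2l.
have -> : X ^+ m.+2 = X ^+ m.+1 * X by rewrite exprSr.
have : rho * (X ^+ m.+1 * X) + X ^+ m.+1 = X ^+ m.+1 * X.
  by rewrite mulrCA -[X in _ = _ * X]hX mulrDr mulr1.
lra.
Qed.

End Real.

Lemma bs_prod (R : comNzRingType) g N (F : 'I_g -> nat -> R) :
  bs N (fun k => \prod_(m < g) F m (k m)) = \prod_(m < g) \sum_(0 <= t < N) F m t.
Proof.
rewrite /bs; under [RHS]eq_bigr do rewrite big_mkord.
by rewrite bigA_distr_bigA.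
Qed.

Section Real2.
Variable R : realType.

Lemma U_bound (rho : R) : 0 <= rho -> rho < 1 -> forall n j N,
  \sum_(0 <= k < N) (k.+1)%:R ^+ n * 'C(k, j)%:R * rho ^+ (k - j) * (1 - rho) ^+ j
  <= (n`!)%:R * (j.+1)%:R ^+ n * ((1 - rho)^-1) ^+ n.+1.
Proof.
move=> r0 r1 n j N.
set r := 1 - rho; set X := r^-1.
have rp : 0 < r by rewrite /r subr_gt0.
have hrX : r * X = 1 by rewrite /X mulfV // gt_eqF.
set Q : R := (n`! * j.+1 ^ n)%N%:R.
pose F t := 'C(t, j + n)%:R * rho ^+ (t - (j + n)).
have F0 t : 0 <= F t by rewrite /F mulr_ge0 // exprn_ge0.
apply: (@le_trans _ _ (\sum_(0 <= k < N) Q * r ^+ j * F (k + n)%N)).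
  apply: ler_sum => k _.
  have -> : (k.+1)%:R ^+ n * 'C(k, j)%:R * rho ^+ (k - j) * r ^+ j =
            ((k.+1 ^ n * 'C(k, j))%N)%:R * (rho ^+ (k - j) * r ^+ j).
    by rewrite natrM natrX !mulrA.
  have -> : Q * r ^+ j * F (k + n)%N =
            ((n`! * j.+1 ^ n * 'C(k + n, j + n))%N)%:R * (rho ^+ (k - j) * r ^+ j).
    rewrite /F /Q subnDr !natrM; ring.
  apply: ler_wpM2r; first by rewrite mulr_ge0 // exprn_ge0 // ltW.
  by rewrite ler_nat nat_bin_bound.
rewrite -mulr_sumr.
have hsum : \sum_(0 <= k < N) F (k + n)%N <= X ^+ (j + n).+1.
  have G : \sum_(0 <= t < n + N) F t <= X ^+ (j + n).+1 := geom_bin r0 r1 (j + n) (n + N).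
  have E : \sum_(n <= i < n + N) F i = \sum_(0 <= k < N) F (k + n)%N.
    by rewrite -{1}(add0n n) big_addn addKn.
  rewrite (big_cat_nat (leq0n n) (leq_addr N n)) /= E in G.
  have : 0 <= \sum_(0 <= t < n) F t by apply: sumr_ge0 => t _; exact: F0.
  lra.
have Q0 : 0 <= Q * r ^+ j by rewrite mulr_ge0 // exprn_ge0 // ltW.
apply: le_trans (ler_wpM2l Q0 hsum) _.
have -> : X ^+ (j + n).+1 = X ^+ j * X ^+ n.+1 by rewrite -exprD addnS.
have -> : Q * r ^+ j * (X ^+ j * X ^+ n.+1) = Q * ((r * X) ^+ j) * X ^+ n.+1.
  by rewrite exprMn; ring.
by rewrite hrX expr1n mulr1 /Q natrM natrX.
Qed.

End Real2.

Section Main.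
Variable R : realType.
Variable g : nat.
Local Notation C := (R[i]).
Local Notation nc := (@normc R).
Local Notation K := ('I_g -> nat).

Lemma nc_mpow (y : 'I_g -> C) (j : K) : nc (mpow y j) = \prod_(m < g) nc (y m) ^+ j m.
Proof. by rewrite /mpow nc_prod; apply: eq_bigr => m _; rewrite ncX. Qed.

Lemma U0 (q : R) n N : 0 <= q -> q < 1 ->
  \sum_(0 <= t < N) (t.+1)%:R ^+ n * q ^+ t <= (n`!)%:R * ((1 - q)^-1) ^+ n.+1.
Proof.
move=> q0 q1; have := U_bound q0 q1 n 0 N.
rewrite expr1n mulr1.
have -> : \sum_(0 <= k < N) (k.+1)%:R ^+ n * 'C(k, 0)%:R * q ^+ (k - 0) * (1 - q) ^+ 0
   = \sum_(0 <= t < N) (t.+1)%:R ^+ n * q ^+ t.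
  by apply: eq_bigr => t _; rewrite bin0 subn0 expr0 !mulr1.
by [].
Qed.

Lemma binom_le (a b : R) k N : 0 <= a -> 0 <= b ->
  \sum_(0 <= t < N) 'C(k, t)%:R * a ^+ (k - t) * b ^+ t <= (a + b) ^+ k.
Proof.
move=> a0 b0.
apply: le_trans (sum_le_trunc (K := k) _ _ _) _.
- by move=> t kt; rewrite bin_small // !mul0r.
- by move=> t; rewrite !mulr_ge0 // exprn_ge0.
rewrite big_mkord exprDn le_eqVlt; apply/orP; left; apply/eqP.
by apply: eq_bigr => t _; rewrite -mulrA mulr_natl.
Qed.

Lemma binom_eq (a b : C) k N : (k < N)%N ->
  \sum_(0 <= t < N) 'C(k, t)%:R * a ^+ (k - t) * b ^+ t = (a + b) ^+ k.
Proof.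
move=> kN.
rewrite (sum_ext kN); last by move=> t kt; rewrite bin_small // !mul0r.
rewrite big_mkord exprDn.
by apply: eq_bigr => t _; rewrite -mulrA mulr_natl.
Qed.

Lemma bs_mulR N (a : R) (F : K -> R) : bs N (fun k => a * F k) = a * bs N F.
Proof. by rewrite /bs mulr_sumr. Qed.

Lemma bs_mulC N (a : C) (F : K -> C) : bs N (fun k => a * F k) = a * bs N F.
Proof. by rewrite /bs mulr_sumr. Qed.

Variables (A : R) (n : 'I_g -> nat) (f : K -> C) (c : 'I_g -> C).
Hypothesis hA : 1 <= A.
Hypothesis hfb : forall k, nc (f k) <= A * \prod_(m < g) ((k m).+1%:R) ^+ (n m).
Hypothesis hc : forall m, nc (c m) < 1.

Let rho m := nc (c m).
Let r m := 1 - rho m.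

Lemma A0 : 0 <= A. Proof. exact: le_trans ler01 hA. Qed.

Lemma rho0 m : 0 <= rho m. Proof. exact: nc_ge0. Qed.
Lemma r0 m : 0 < r m. Proof. by rewrite /r subr_gt0; apply: hc. Qed.
Lemma r_ge0 m : 0 <= r m. Proof. exact: ltW (r0 m). Qed.
Lemma r1 m : r m <= 1. Proof. by rewrite /r; have := rho0 m; lra. Qed.

Definition e (k j : K) : C :=
  f k * \prod_(m < g) ('C(k m, j m)%:R * c m ^+ (k m - j m) * ((r m)%:C) ^+ (j m)).

Lemma nc_e k j : nc (e k j) =
  nc (f k) * \prod_(m < g) ('C(k m, j m)%:R * rho m ^+ (k m - j m) * r m ^+ j m).
Proof.
rewrite /e ncM nc_prod; congr (_ * _); apply: eq_bigr => m _.
by rewrite !ncM ncn !ncX ncR ger0_norm // r_ge0.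
Qed.

Definition Bd (j : K) : R :=
  A * \prod_(m < g) ((n m)`!%:R * (j m).+1%:R ^+ n m * ((r m)^-1) ^+ (n m).+1).

Lemma H1 j N : bs N (fun k => nc (e k j)) <= Bd j.
Proof.
apply: (@le_trans _ _ (bs N (fun k => A * \prod_(m < g) ((k m).+1%:R ^+ n m *
   ('C(k m, j m)%:R * rho m ^+ (k m - j m) * r m ^+ j m))))).
  apply: ler_sum => k _; rewrite nc_e [in X in _ <= X]big_split /= [in X in _ <= X]mulrA.
  apply: ler_wpM2r; last exact: hfb.
  apply: prodr_ge0 => m _; by rewrite !mulr_ge0 ?exprn_ge0 ?rho0 ?r_ge0.
rewrite bs_mulR.
rewrite /Bd; apply: ler_wpM2l; first exact: A0.
rewrite (bs_prod N (fun m t => t.+1%:R ^+ n m *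
   ('C(t, j m)%:R * rho m ^+ (t - j m) * r m ^+ j m))).
apply: ler_prod => m _; apply/andP; split.
  apply: sumr_ge0 => t _; by rewrite !mulr_ge0 ?exprn_ge0 ?rho0 ?r_ge0.
have := U_bound (rho0 m) (hc m) (n m) (j m) N.
have -> : \sum_(0 <= k < N) k.+1%:R ^+ n m * 'C(k, j m)%:R * rho m ^+ (k - j m) * (1 - rho m) ^+ j m
  = \sum_(0 <= t < N) t.+1%:R ^+ n m * ('C(t, j m)%:R * rho m ^+ (t - j m) * r m ^+ j m).
  by apply: eq_bigr => t _; rewrite !mulrA.
by [].
Qed.

Definition Fc (j : K) : C := proj1_sig (cid (inner_exists (fun N => H1 j N))).

Lemma Fc_cv j : cv (fun N => bs N (fun k => e k j)) (Fc j).
Proof. exact: (proj2_sig (cid (inner_exists (fun N => H1 j N)))). Qed.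

Lemma Fc_bound j : nc (Fc j) <= Bd j.
Proof.
have := @cv_le R _ (Fc j) 0 (Bd j) 0%N (Fc_cv j).
rewrite subr0; apply => N _; rewrite subr0.
exact: le_trans (nc_bs _ _) (H1 j N).
Qed.

Definition Ac : R := (mfact n)%:R * A * expR ((g + mnorm1 n)%:R) * 2 ^+ (g + mnorm1 n)
                * \prod_(m < g) (1 - normc (c m)) ^- (n m + 2).

Lemma EE : 1 <= expR ((g + mnorm1 n)%:R) * 2 ^+ (g + mnorm1 n) :> R.
Proof.
apply: mulr_ege1; last by apply: exprn_ege1; lra.
apply: le_trans (expR_ge1Dx _); rewrite lerDl //.
Qed.

Lemma Pr_ge1 : 1 <= \prod_(m < g) (1 - normc (c m)) ^- (n m + 2).
Proof.
elim/big_ind: _ => //; first by move=> x y; apply: mulr_ege1.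
move=> m _; have := r0 m; have := r1 m; rewrite /r /rho => a b.
rewrite invr_ge1 ?unitfE ?gt_eqF ?exprn_gt0 //.
by apply: exprn_ile1 => //; apply: ltW.
Qed.

Lemma Ac_ge1 : 1 <= Ac.
Proof.
have hM : 1 <= (mfact n)%:R :> R.
  rewrite ler1n /mfact; apply: prodn_gt0 => m; exact: fact_gt0.
rewrite /Ac -!mulrA; apply: mulr_ege1 => //; apply: mulr_ege1 => //.
rewrite mulrA; apply: mulr_ege1; [exact: EE | exact: Pr_ge1].
Qed.

Lemma Bd_le j : Bd j <= Ac * \prod_(m < g) ((j m).+1%:R) ^+ (n m).+1.
Proof.
rewrite /Bd.
apply: (@le_trans _ _ (A * \prod_(m < g) ((n m)`!%:R *
   ((1 - normc (c m)) ^- (n m + 2) * (j m).+1%:R ^+ (n m).+1)))).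
  apply: ler_wpM2l; first exact: A0.
  apply: ler_prod => m _.
  have X1 : 1 <= (r m)^-1.
    by rewrite invr_ge1 ?unitfE ?gt_eqF ?r0 ?r1.
  have J1 : 1 <= (j m).+1%:R :> R by rewrite ler1n.
  have X0 : 0 <= (r m)^-1 by rewrite invr_ge0 r_ge0.
  apply/andP; split.
    by rewrite !mulr_ge0 // exprn_ge0.
  rewrite -mulrA ler_wpM2l // mulrC.
  apply: ler_pM; rewrite ?exprn_ge0 //.
    rewrite -exprVn addn2 [in X in _ <= X]exprSr.
    by apply: ler_peMr; rewrite ?exprn_ge0.
  by rewrite [in X in _ <= X]exprSr; apply: ler_peMr; rewrite ?exprn_ge0.
rewrite big_split big_split /= -natr_prod.
set M := (\prod_(m < g) (n m)`!)%:R.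
set P := \prod_(m < g) _ ^- _.
set J := \prod_(m < g) _ ^+ _.
have -> : Ac * J = (A * (M * (P * J))) * (expR ((g + mnorm1 n)%:R) * 2 ^+ (g + mnorm1 n)).
  by rewrite /Ac /M /mfact /P; ring.
apply: ler_peMr; last exact: EE.
rewrite !mulr_ge0 //; first exact: A0.
- exact: (le_trans ler01 Pr_ge1).
- by apply: prodr_ge0 => m _; rewrite exprn_ge0.
Qed.

Definition qq (y : 'I_g -> C) m := rho m + r m * nc (y m).

Lemma qq0 y m : 0 <= qq y m.
Proof. by rewrite /qq addr_ge0 ?rho0 // mulr_ge0 ?r_ge0 ?nc_ge0. Qed.

Lemma qq1 y m : nc (y m) < 1 -> qq y m < 1.
Proof.
move=> hy; have h : r m * nc (y m) < r m * 1 by rewrite ltr_pM2l // r0.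
by move: h; rewrite /qq /r mulr1; lra.
Qed.

Lemma nc_ea k j (y : 'I_g -> C) : nc (e k j * mpow y j) = nc (f k) *
  \prod_(m < g) ('C(k m, j m)%:R * rho m ^+ (k m - j m) * (r m * nc (y m)) ^+ j m).
Proof.
rewrite ncM nc_e nc_mpow -mulrA; congr (_ * _); rewrite -big_split.
by apply: eq_bigr => m _ /=; rewrite exprMn; ring.
Qed.

Definition B2 (y : 'I_g -> C) : R :=
  A * \prod_(m < g) ((n m)`!%:R * ((1 - qq y m)^-1) ^+ (n m).+1).

Lemma H2 (y : 'I_g -> C) : (forall m, nc (y m) < 1) -> forall N,
  bs N (fun k => bs N (fun j => nc (e k j * mpow y j))) <= B2 y.
Proof.
move=> hy N.
apply: (@le_trans _ _ (bs N (fun k => A * \prod_(m < g) ((k m).+1%:R ^+ n m * qq y m ^+ k m)))).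
  apply: ler_sum => k _.
  have -> : (fun j => nc (e (fun m => nat_of_ord (k m)) j * mpow y j)) =
     (fun j => nc (f (fun m => nat_of_ord (k m))) * \prod_(m < g) ('C(k m, j m)%:R *
        rho m ^+ (k m - j m) * (r m * nc (y m)) ^+ j m)).
    by apply: funext => j; rewrite nc_ea.
  rewrite bs_mulR (bs_prod N (fun m t => 'C(k m, t)%:R * rho m ^+ (k m - t) * (r m * nc (y m)) ^+ t)).
  rewrite [in X in _ <= X]big_split /= [in X in _ <= X]mulrA.
  apply: ler_pM.
  - exact: nc_ge0.
  - apply: prodr_ge0 => m _; apply: sumr_ge0 => t _.
    by rewrite !mulr_ge0 ?exprn_ge0 ?rho0 ?mulr_ge0 ?r_ge0 ?nc_ge0.
  - exact: hfb.
  apply: ler_prod => m _; apply/andP; split.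
    apply: sumr_ge0 => t _.
    by rewrite !mulr_ge0 ?exprn_ge0 ?rho0 ?mulr_ge0 ?r_ge0 ?nc_ge0.
  by apply: binom_le; rewrite ?rho0 // mulr_ge0 ?r_ge0 ?nc_ge0.
rewrite bs_mulR /B2; apply: ler_wpM2l; first exact: A0.
rewrite (bs_prod N (fun m t => t.+1%:R ^+ n m * qq y m ^+ t)).
apply: ler_prod => m _; apply/andP; split.
  by apply: sumr_ge0 => t _; rewrite mulr_ge0 ?exprn_ge0 ?qq0.
exact: U0 (qq0 y m) (qq1 (hy m)).
Qed.

Lemma expand (y : 'I_g -> C) (k : K) N : (forall m, (k m < N)%N) ->
  f k * mpow (fun m => c m + y m * (r m)%:C) k = bs N (fun j => e k j * mpow y j).
Proof.
move=> hk.
have -> : (fun j => e k j * mpow y j) = (fun j => f k * \prod_(m < g)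
    ('C(k m, j m)%:R * c m ^+ (k m - j m) * (y m * (r m)%:C) ^+ j m)).
  apply: funext => j; rewrite /e /mpow -mulrA; congr (_ * _); rewrite -big_split.
  by apply: eq_bigr => m _ /=; rewrite exprMn; ring.
rewrite bs_mulC (bs_prod N (fun m t => 'C(k m, t)%:R * c m ^+ (k m - t) * (y m * (r m)%:C) ^+ t)).
congr (_ * _); rewrite /mpow; apply: eq_bigr => m _.
by rewrite binom_eq.
Qed.

End Main.

Unset Implicit Arguments. Set Strict Implicit.

Theorem mainTheorem14 (R : realType) (g : nat) (hg : (1 <= g)%N) (A : R)
    (n : 'I_g -> nat) (f : ('I_g -> nat) -> R[i])
    (hf : order_of_magnitude f A n)
    (c : 'I_g -> R[i]) (hc : polydisc (fun _ => 0) 1 c) :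
  let Ac : R := (mfact n)%:R * A * expR ((g + mnorm1 n)%:R) * 2 ^+ (g + mnorm1 n)
                * \prod_(m < g) (1 - normc (c m)) ^- (n m + 2) in
  exists Fc : ('I_g -> nat) -> R[i],
    order_of_magnitude Fc Ac (fun m => (n m).+1) /\
    forall y : 'I_g -> R[i], polydisc (fun _ => 0) 1 y ->
      exists l : R[i],
        pseries_sum f (fun m => c m + y m * (1 - normc (c m))%:C) l /\
        pseries_sum Fc y l.
Proof.
move=> Ac0.
case: hf => [hA [hn hfb]].
have hc' : forall m, normc (c m) < 1 by move=> m; have := hc m; rewrite subr0.
exists (Fc hA hfb hc'); split.
  split; first exact: (@Ac_ge1 R g A n c hA hc').
  split; first by [].
  move=> j; exact: le_trans (Fc_bound hA hfb hc' j) (@Bd_le R g A n c hA hc' j).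
move=> y hy.
have hy' : forall m, normc (y m) < 1 by move=> m; have := hy m; rewrite subr0.
have [L [hD hT]] := fubini (Fc_cv hA hfb hc') (@H2 R g A n f c hA hfb hc' y hy').
exists L; split; last exact: hT.
have E : (fun N => bs N (fun k => bs N (fun j => @e R g f c k j * mpow y j))) =
         box_psum f (fun m => c m + y m * (1 - normc (c m))%:C).
  apply: funext => N; rewrite /box_psum /bs; apply: eq_bigr => k _.
  exact: esym (expand f c y (k:=fun m => nat_of_ord (k m)) (N:=N) (fun m => ltn_ord (k m))).
by rewrite E in hD.
Qed.
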